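(* Let $\phi:\mathbb{R}^2_{\ge}\times X\times\Omega\to X$ be a nonautonomous random dynamical system (NRDS) on a probability space $(\Omega,\mathcal{F},\mathbb{P})$ whose state space $X$ is finite. For $t\in\mathbb{R}$ and $\omega\in\Omega$ define \[ A(t,\omega):=\bigcap_{t_0\le t}\phi(t,t_0,X,\omega). \] Then $A(t,\omega)$ is nonempty for all $\omega\in\Omega$, $t\in\mathbb{R}$, and $A$ defines a global random pullback attractor. Moreover, for all $\omega\in\Omega$ and $t\in\mathbb{R}$ there exists $T_0(t,\omega)<t$ such that $\phi(t,t_0,X,\omega)=A(t,\omega)$ for all $t_0\le T_0(t,\omega)$. If, in addition, for each $p\in(0,1)$ there is $T_p>0$ such that \[ \mathbb{P}(\{\omega\in\Omega\mid t-T_0(t,\omega)\le T_p\})\ge p \quad\text{for all } t\in\mathbb{R}, \] then $A$ also defines a global random forward attractor, and for almost every $\omega\in\Omega$ and all $t_0\in\mathbb{R}$ there exists $T(t_0,\omega)>t_0$ such that $\phi(t,t_0,X,\omega)=A(t,\omega)$ for all $t\ge T(t_0,\omega)$.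
   Context: Let $\mathbb{R}^2_{\ge}:=\{(t,s)\in\mathbb{R}^2\mid t\ge s\}$, $(X,d_X)$ a Polish metric space and $(\Omega,\mathcal{F},\mathbb{P})$ a probability space. A map $\phi:\mathbb{R}^2_\ge\times X\times\Omega\to X$ is an NRDS if (i) it is $(\mathcal{B}(\mathbb{R}^2_\ge)\times\mathcal{B}(X)\times\mathcal{F},\mathcal{B}(X))$-measurable; (ii) $\phi(t,t,\cdot,\omega)$ is the identity on $X$ for all $t,\omega$; (iii) (cocycle property) $\phi(t,t_0,x,\omega)=\phi(t,s,\phi(s,t_0,x,\omega),\omega)$ for all $t\ge s\ge t_0$, $x\in X$, $\omega\in\Omega$; (iv) $x\mapsto\phi(t,s,x,\omega)$ is continuous. For $B\subset X$ write $\phi(t,t_0,B,\omega)=\{\phi(t,t_0,x,\omega)\mid x\in B\}$. A finite state space carries the discrete topology and the metric $d(x_1,x_2)=1$ if $x_1\ne x_2$, $0$ otherwise; $\mathrm{dist}(A_1,A_2):=\sup_{a_1\in A_1}\inf_{a_2\in A_2}d(a_1,a_2)$. A nonautonomous random set is a family $(C(t))_{t\in\mathbb{R}}$ of measurable subsets of $X\times\Omega$ (product $\sigma$-algebra), with $\omega$-sections $C(t,\omega)=\{x\mid (x,\omega)\in C(t)\}$; it is compact if every $C(t,\omega)$ is compact. A compact nonautonomous random set $A$ that is strictly $\phi$-invariant, i.e. $\phi(t,t_0,A(t_0,\omega),\omega)=A(t,\omega)$ for all $(t,t_0)\in\mathbb{R}^2_\ge$ a.s., is a global random pullback attractor if for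 each $t\in\mathbb{R}$, $\lim_{t_0\to-\infty}\mathrm{dist}(\phi(t,t_0,X,\omega),A(t,\omega))=0$ a.s.; it is a global random forward attractor if for each $t_0\in\mathbb{R}$, $\lim_{t\to\infty}\mathrm{dist}(\phi(t,t_0,X,\omega),A(t,\omega))=0$ a.s. *)

(* Defs.v *)
From HB Require Import structures.
From mathcomp Require Import all_boot all_order all_algebra.
From mathcomp Require Import all_classical all_reals all_analysis.
Set Implicit Arguments. Unset Strict Implicit. Unset Printing Implicit Defensive.
Import Order.TTheory GRing.Theory Num.Theory.
Import numFieldNormedType.Exports.
Local Open Scope classical_set_scope.
Local Open Scope ring_scope.

(* The state space X is a finite (nonempty) type with the
   discrete topology and the discrete metric; Omega is a measurable space with
   a probability P.  An NRDS is given as a total function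
   phi : R -> R -> X -> Omega -> X, only its values at t >= s matter. *)

Section NRDS.
Variables (R : realType) (d : measure_display) (Omega : measurableType d)
  (X : finType).

Definition dX (x1 x2 : X) : R := if x1 == x2 then 0 else 1.

Definition hdist (A1 A2 : set X) : R :=
  sup [set inf [set dX a1 a2 | a2 in A2] | a1 in A1].

Definition img (phi : R -> R -> X -> Omega -> X) (t t0 : R) (B : set X)
  (w : Omega) : set X := [set phi t t0 x w | x in B].

(* (i) measurability of phi w.r.t. B(R^2_>=) x P(X) x F, unfolded for the
   finite discrete space X: for every x, y the set of ((t,s),omega) with t >= s
   and phi(t,s,x,omega) = y is measurable in B(R x R) x F. *)
Definition nrds_measurable (phi : R -> R -> X -> Omega -> X) : Prop :=
  forall x y : X,
    measurable [set p : (R * R) * Omega |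
                 p.1.2 <= p.1.1 /\ phi p.1.1 p.1.2 x p.2 = y].

Definition is_NRDS (phi : R -> R -> X -> Omega -> X) : Prop :=
  [/\ nrds_measurable phi,
      (forall t w x, phi t t x w = x),
      (forall t s t0 x w, t0 <= s -> s <= t ->
          phi t t0 x w = phi t s (phi s t0 x w) w) &
      (* (iv) continuity of x |-> phi(t,s,x,w) holds automatically for
         the discrete topology on the finite X *)
      True].

(* a nonautonomous random set: each C(t) is a measurable subset of X x Omega;
   for finite discrete X this means every x-section is measurable *)
Definition random_set (C : R -> Omega -> set X) : Prop :=
  forall t (x : X), measurable [set w : Omega | C t w x].

(* compactness of C(t,w) is automatic (X finite, discrete) *)

Definition strictly_invariant (P : probability Omega R)
  (phi : R -> R -> X -> Omega -> X) (C : R -> Omega -> set X) : Prop :=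
  {ae P, forall w, forall t t0 : R, t0 <= t -> img phi t t0 (C t0 w) w = C t w}.

Definition pullback_attractor (P : probability Omega R)
  (phi : R -> R -> X -> Omega -> X) (C : R -> Omega -> set X) : Prop :=
  [/\ random_set C, strictly_invariant P phi C &
      forall t : R, {ae P, forall w,
        (fun t0 => hdist (img phi t t0 setT w) (C t w)) @ -oo --> (0 : R)}].

Definition forward_attractor (P : probability Omega R)
  (phi : R -> R -> X -> Omega -> X) (C : R -> Omega -> set X) : Prop :=
  [/\ random_set C, strictly_invariant P phi C &
      forall t0 : R, {ae P, forall w,
        (fun t => hdist (img phi t t0 setT w) (C t w)) @ +oo --> (0 : R)}].

Definition Aset (phi : R -> R -> X -> Omega -> X) (t : R) (w : Omega) : set X :=
  \bigcap_(t0 in [set t0 | t0 <= t]) img phi t t0 setT w.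

End NRDS.

(* Main.v *)
Require Import Defs.
From HB Require Import structures.
From mathcomp Require Import all_boot all_order all_algebra.
From mathcomp Require Import all_classical all_reals all_analysis.
From mathcomp Require Import lra.
Import Order.TTheory GRing.Theory Num.Theory.
Import numFieldNormedType.Exports.
Local Open Scope classical_set_scope.
Local Open Scope ring_scope.

Section Aux.
Context {R : realType} {d : measure_display} {Omega : measurableType d}
  {X : finType} {phi : R -> R -> X -> Omega -> X}.
Hypothesis Hco : forall t s t0 x w, t0 <= s -> s <= t ->
          phi t t0 x w = phi t s (phi s t0 x w) w.

Lemma img_comp t s t0 B w : t0 <= s -> s <= t ->
  img phi t t0 B w = img phi t s (img phi s t0 B w) w.
Proof.
move=> h1 h2; rewrite /img; apply/seteqP; split => x /=.
  by move=> [y By <-]; exists (phi s t0 y w); [exists y|rewrite -Hco].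
by move=> [_ [y By <-] <-]; exists y => //; rewrite -Hco.
Qed.

Lemma img_mono t s t0 w : t0 <= s -> s <= t ->
  img phi t t0 setT w `<=` img phi t s setT w.
Proof. by move=> h1 h2; rewrite (@img_comp t s t0 setT w h1 h2) => x [y _ <-]; exists y. Qed.

Lemma Aset_sub t t0 w : t0 <= t -> Aset phi t w `<=` img phi t t0 setT w.
Proof. by move=> h x; apply; exact: h. Qed.

Lemma stab t w : exists T, T < t /\ forall t0, t0 <= T -> img phi t t0 setT w = Aset phi t w.
Proof.
have [f hf] : {f : X -> R & forall x, f x <= t /\ (~ Aset phi t w x -> ~ img phi t (f x) setT w x)}.
  apply: (@boolp.choice X R (fun x r => r <= t /\ (~ Aset phi t w x -> ~ img phi t r setT w x))) => x. have [hA|hA] := pselect (Aset phi t w x); first by exists t.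
  move: hA => /existsNP [t0 /not_implyP [ht0 hn]]; by exists t0.
pose T := t - 1 - \sum_(x : X) `|f x - t|.
have hT : forall x, T <= f x.
  move=> x; rewrite /T (bigD1 x) //=.
  have : 0 <= \sum_(i | i != x) `|f i - t| by apply: sumr_ge0.
  have : f x - t <= `|f x - t| by exact: ler_norm.
  have : - `|f x - t| <= f x - t by rewrite lerNnormlW.
  lra.
exists T; split.
  rewrite /T; have : 0 <= \sum_(x : X) `|f x - t| by apply: sumr_ge0.
  lra.
have hTt : T <= t - 1.
  rewrite /T; have : 0 <= \sum_(x : X) `|f x - t| by apply: sumr_ge0.
  lra.
move=> t0 ht0; apply/seteqP; split; last first.
  apply: Aset_sub; lra.
move=> x hx; apply: contrapT => hA.
have [hf1 hf2] := hf x; apply: (hf2 hA).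
apply: (@img_mono t (f x) t0 w _ hf1) => //; have := hT x; lra.
Qed.

Lemma Aset_ne (x0 : X) t w : Aset phi t w !=set0.
Proof.
have [T [hT1 hT2]] := stab t w; rewrite -(hT2 T (lexx T)).
by exists (phi t T x0 w); exists x0.
Qed.

Lemma Aset_inv t t0 w : t0 <= t -> img phi t t0 (Aset phi t0 w) w = Aset phi t w.
Proof.
move=> htt0.
have [T1 [hT1 hT1']] := stab t0 w; have [T2 [hT2 hT2']] := stab t w.
pose s := Num.min T1 T2.
have hs1 : s <= T1 by rewrite /s ge_min lexx.
have hs2 : s <= T2 by rewrite /s ge_min lexx orbT.
rewrite -(hT1' s hs1) -(@img_comp t t0 s) //; last lra.
exact: hT2'.
Qed.

Lemma Aset_meas : nrds_measurable phi -> forall t x, measurable [set w | Aset phi t w x].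
Proof.
move=> hm t x.
pose S y := [set p : (R * R) * Omega | p.1.2 <= p.1.1 /\ phi p.1.1 p.1.2 y p.2 = x].
have -> : [set w | Aset phi t w x] =
   \bigcap_(n in setT) \bigcup_(y in setT) xsection (S y) (t, t - n%:R).
  apply/seteqP; split => w /=.
    move=> hA n _; have hn : t - n%:R <= t by rewrite lerBlDr lerDl.
    have [y _ hy] := hA _ hn; exists y => //.
    by rewrite /xsection /= inE /S /=.
  move=> hw t0 ht0.
  pose n := (Num.truncn (t - t0)).+1.
  have hn : t - n%:R <= t0 by have := truncnS_gt (t - t0); rewrite -/n; lra.
  apply: (@img_mono t t0 (t - n%:R) w hn ht0).
  have [y _] := hw n Logic.I; rewrite /xsection /= inE /S /= => -[_ hy].
  by exists y.
apply: bigcapT_measurable => n.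
apply: fin_bigcup_measurable; first exact: finite_finset.
by move=> y _; apply: measurable_xsection; exact: hm.
Qed.

Lemma hdist_self (A : set X) : A !=set0 -> hdist R A A = 0.
Proof.
move=> [a Aa]; rewrite /hdist.
have -> : [set inf [set dX R a1 a2 | a2 in A] | a1 in A] = [set (0:R)].
  apply/seteqP; split => r /=.
    move=> [a1 Aa1 <-]; apply/eqP; rewrite eq_le; apply/andP; split.
      have hl : has_lbound [set dX R a1 a2 | a2 in A].
        by exists 0 => z [a2 _ <-]; rewrite /dX; case: ifP.
      apply: (ge_inf hl); exists a1 => //; by rewrite /dX eqxx.
    apply: lb_le_inf; first by exists (dX R a1 a1), a1.
    by move=> z [a2 _ <-]; rewrite /dX; case: ifP.
  move=> ->; exists a => //; apply/eqP; rewrite eq_le; apply/andP; split.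
    have hl : has_lbound [set dX R a a2 | a2 in A].
      by exists 0 => z [a2 _ <-]; rewrite /dX; case: ifP.
    apply: (ge_inf hl); exists a => //; by rewrite /dX eqxx.
  apply: lb_le_inf; first by exists (dX R a a), a.
  by move=> z [a2 _ <-]; rewrite /dX; case: ifP.
by rewrite sup1.
Qed.

Lemma stays_eq s t t' w : s <= t -> t <= t' ->
  img phi t s setT w = Aset phi t w -> img phi t' s setT w = Aset phi t' w.
Proof.
move=> h1 h2 he; rewrite (@img_comp t' t s) // he; exact: Aset_inv.
Qed.

Lemma back_eq s s' t w : s' <= s -> s <= t ->
  img phi t s setT w = Aset phi t w -> img phi t s' setT w = Aset phi t w.
Proof.
move=> h1 h2 he; apply/seteqP; split.
  by rewrite -he; apply: img_mono.
apply: Aset_sub; lra.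
Qed.
End Aux.

Theorem theorem6 (R : realType) (d : measure_display) (Omega : measurableType d)
  (P : probability Omega R) (X : finType) (x0 : X)
  (phi : R -> R -> X -> Omega -> X) :
  is_NRDS phi ->
  [/\ (forall (t : R) (w : Omega), Aset phi t w !=set0),
      pullback_attractor P phi (Aset phi),
      (forall (w : Omega) (t : R), exists T0 : R,
          T0 < t /\ forall t0 : R, t0 <= T0 -> img phi t t0 setT w = Aset phi t w) &
      (forall T0 : R -> Omega -> R,
         (forall (t : R) (w : Omega), T0 t w < t /\
            forall t0 : R, t0 <= T0 t w -> img phi t t0 setT w = Aset phi t w) ->
         (forall p : R, 0 < p < 1 -> exists Tp : R, 0 < Tp /\
            forall t : R,
              measurable [set w : Omega | t - T0 t w <= Tp] /\
              (p%:E <= P [set w : Omega | (t - T0 t w <= Tp)%R])%E) ->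
         forward_attractor P phi (Aset phi) /\
         {ae P, forall w, forall t0 : R, exists T : R, t0 < T /\
            forall t : R, T <= t -> img phi t t0 setT w = Aset phi t w})].
Proof.
case=> hm Hid Hco _.
have hrs : random_set (Aset phi) by move=> t x; exact: Aset_meas Hco hm t x.
have hsi : strictly_invariant P phi (Aset phi).
  by apply: aeW => w t t0 h; exact: (Aset_inv Hco t t0 w h).
split.
- move=> t w; exact (Aset_ne Hco x0 t w).
- split => // t; apply: aeW => w.
  have [T [hT hT']] := stab Hco t w.
  apply: cvg_near_cst; exists T; split; first exact: num_real.
  move=> t0 /ltW h0 /=; rewrite hT' //; exact: hdist_self (Aset_ne Hco x0 t w).
- move=> w t; exact (stab Hco t w).
move=> T0 hT0 hprob.
have K : forall s : R, {ae P, forall w, exists T, s < T /\ forall t, T <= t -> img phi t s setT w = Aset phi t w}.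
  move=> s.
  pose p (k : nat) : R := 1 - (k.+2)%:R^-1.
  have hp : forall k, 0 < p k < 1.
    move=> k; rewrite /p; have h2 : (1 : R) < (k.+2)%:R by rewrite ltr1n.
    have h0 : 0 < (k.+2)%:R^-1 :> R by rewrite invr_gt0 ltr0n.
    have h1 : (k.+2)%:R^-1 < 1 :> R by rewrite invf_lt1 // ltr0n.
    move: h0 h1; set x := (k.+2)%:R^-1 => h0 h1; apply/andP; split; lra.
  have [Tp hTp] : {Tp : nat -> R & forall k, 0 < Tp k /\ forall t : R,
              measurable [set w : Omega | t - T0 t w <= Tp k] /\
              ((p k)%:E <= P [set w : Omega | (t - T0 t w <= Tp k)%R])%E}.
    apply: (@boolp.choice nat R (fun k Tpk => 0 < Tpk /\ forall t : R,
              measurable [set w : Omega | t - T0 t w <= Tpk] /\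
              ((p k)%:E <= P [set w : Omega | (t - T0 t w <= Tpk)%R])%E)) => k.
    exact: hprob (hp k).
  pose G k := [set w : Omega | (s + Tp k) - T0 (s + Tp k) w <= Tp k].
  have mG : forall k, measurable (G k) by move=> k; exact: ((hTp k).2 _).1.
  pose N := \bigcap_k ~` G k.
  have mN : measurable N by apply: bigcapT_measurable => k; apply: measurableC.
  exists N; split => //.
    apply/eqP; rewrite eq_le measure_ge0 andbT; apply/lee_addgt0Pr => e he.
    rewrite add0e.
    pose k := Num.truncn (e^-1).
    have hk : e^-1 < k.+1%:R by exact: truncnS_gt.
    have hle : (P N <= P (~` G k))%E.
      by apply: le_measure; rewrite ?inE //; [apply: measurableC | move=> w; apply].
    apply: (le_trans hle); rewrite probability_setC //.
    have := ((hTp k).2 (s + Tp k)).2; rewrite -/(G k).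
    have := probability_le1 P (mG k).
    have := measure_ge0 P (G k).
    case: (P (G k)) => [r| |] //= h0 h1 h2.
    rewrite -EFinB lee_fin; rewrite lee_fin /p in h2.
    have h3 : (k.+2)%:R^-1 <= e.
      rewrite -[e]invrK lef_pV2 ?posrE ?invr_gt0 ?ltr0n //.
      apply: ltW; apply: (lt_le_trans hk); rewrite ler_nat; exact: leqnSn.
    move: h2 h3; set x := (k.+2)%:R^-1; lra.
  move=> w /= hnot k _ Gk; apply: hnot.
  have hTk := (hTp k).1.
  exists (s + Tp k); split; first lra.
  move=> t ht; apply: (@stays_eq _ _ _ _ _ Hco s (s + Tp k)); [lra|lra|].
  apply: (hT0 (s + Tp k) w).2; rewrite /G /= in Gk; lra.
have K2 : {ae P, forall w, forall t0 : R, exists T : R, t0 < T /\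
            forall t : R, T <= t -> img phi t t0 setT w = Aset phi t w}.
  have := ae_foralln (fun n => K n%:R); apply: filterS => w hw t0.
  pose n := (Num.truncn t0).+1.
  have hn : t0 < n%:R by exact: truncnS_gt.
  have [T [hT hT']] := hw n; exists T; split; first lra.
  move=> t ht; apply: (@back_eq _ _ _ _ _ Hco n%:R); [lra|lra|exact: hT'].
split => //; split => // t0.
apply: filterS K2 => w /(_ t0) [T [hT hT']].
apply: cvg_near_cst; exists T; split; first exact: num_real.
move=> t /ltW h /=; rewrite hT' //; exact: hdist_self (Aset_ne Hco x0 t w).
Qed.
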